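(* The variety $\mathcal{WHB}$ of WHB-algebras has the amalgamation property: for all WHB-algebras $\mathbf A,\mathbf B,\mathbf C$ and injective homomorphisms $i\colon\mathbf A\to\mathbf B$, $j\colon\mathbf A\to\mathbf C$, there exist a WHB-algebra $\mathbf D$ and injective homomorphisms $h\colon\mathbf B\to\mathbf D$, $k\colon\mathbf C\to\mathbf D$ with $h\circ i=k\circ j$.
   Context: A WHB-algebra is an algebra $(A,\wedge,\vee,\to,\leftarrow,0,1)$ such that $(A,\wedge,\vee,0,1)$ is a bounded distributive lattice and for all $a,b,c\in A$: $a\to a=1$; $a\to(b\wedge c)=(a\to b)\wedge(a\to c)$; $(a\vee b)\to c=(a\to c)\wedge(b\to c)$; $(a\to b)\wedge(b\to c)\le a\to c$; $a\leftarrow a=0$; $(a\vee b)\leftarrow c=(a\leftarrow c)\vee(b\leftarrow c)$; $a\leftarrow(b\wedge c)=(a\leftarrow b)\vee(a\leftarrow c)$; $a\leftarrow c\le(a\leftarrow b)\vee(b\leftarrow c)$; $a\wedge((a\to b)\leftarrow 0)\le b$; $a\le b\vee(1\to(a\leftarrow b))$. *)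

(* Defs.v *)
Record WHBOps (A : Type) := {
  meet : A -> A -> A;
  join : A -> A -> A;
  rimp : A -> A -> A;
  limp : A -> A -> A;
  bot : A;
  top : A
}.
Arguments meet {A}. Arguments join {A}. Arguments rimp {A}.
Arguments limp {A}. Arguments bot {A}. Arguments top {A}.

Definition le {A} (o : WHBOps A) (a b : A) : Prop := meet o a b = a.

Definition is_WHB {A : Type} (o : WHBOps A) : Prop :=
  let m := meet o in let j := join o in let r := rimp o in let l := limp o in
  let z := bot o in let u := top o in
  (forall a b c, m a (m b c) = m (m a b) c) /\
  (forall a b c, j a (j b c) = j (j a b) c) /\
  (forall a b, m a b = m b a) /\
  (forall a b, j a b = j b a) /\
  (forall a b, m a (j a b) = a) /\
  (forall a b, j a (m a b) = a) /\
  (forall a b c, m a (j b c) = j (m a b) (m a c)) /\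
  (forall a, m a z = z) /\
  (forall a, j a u = u) /\
  (forall a, r a a = u) /\
  (forall a b c, r a (m b c) = m (r a b) (r a c)) /\
  (forall a b c, r (j a b) c = m (r a c) (r b c)) /\
  (forall a b c, le o (m (r a b) (r b c)) (r a c)) /\
  (forall a, l a a = z) /\
  (forall a b c, l (j a b) c = j (l a c) (l b c)) /\
  (forall a b c, l a (m b c) = j (l a b) (l a c)) /\
  (forall a b c, le o (l a c) (j (l a b) (l b c))) /\
  (forall a b, le o (m a (l (r a b) z)) b) /\
  (forall a b, le o a (j b (r u (l a b)))).

Record WHBAlgebra := {
  carrier :> Type;
  ops : WHBOps carrier;
  whb_ax : is_WHB ops
}.

Definition is_hom (A B : WHBAlgebra) (f : A -> B) : Prop :=
  (forall a b, f (meet (ops A) a b) = meet (ops B) (f a) (f b)) /\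
  (forall a b, f (join (ops A) a b) = join (ops B) (f a) (f b)) /\
  (forall a b, f (rimp (ops A) a b) = rimp (ops B) (f a) (f b)) /\
  (forall a b, f (limp (ops A) a b) = limp (ops B) (f a) (f b)) /\
  f (bot (ops A)) = bot (ops B) /\
  f (top (ops A)) = top (ops B).

Definition injective {X Y : Type} (f : X -> Y) : Prop :=
  forall x y, f x = f y -> x = y.

(* Main.v *)
From Stdlib Require Import Classical FunctionalExtensionality PropExtensionality.
Require Import Defs.
From mathcomp Require classical_sets.

Notation M A := (meet (ops A)).
Notation J A := (join (ops A)).
Notation RI A := (rimp (ops A)).
Notation LI A := (limp (ops A)).
Notation Z A := (bot (ops A)).
Notation U A := (top (ops A)).
Notation L A := (le (ops A)).

Ltac dax A := let HH := fresh "HH" in pose proof (whb_ax A) as HH; unfold is_WHB in HH; cbv zeta in HH;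
  destruct HH as (mA&jA&mC&jC&mabs&jabs&dis&m0&j1&rr&rm&rj&rt&ll&lj&lm&lt&ax1&ax2); unfold le in *.


Lemma m_idem (A : WHBAlgebra) a : M A a a = a.
Proof. dax A. rewrite <- (jabs a a) at 2. apply mabs. Qed.
Lemma le_refl (A : WHBAlgebra) a : L A a a.
Proof. apply m_idem. Qed.
Lemma le_trans (A : WHBAlgebra) a b c : L A a b -> L A b c -> L A a c.
Proof. dax A. intros h1 h2. rewrite <- h1 at 1. rewrite <- mA, h2. exact h1. Qed.
Lemma le_antisym (A : WHBAlgebra) a b : L A a b -> L A b a -> a = b.
Proof. dax A. intros h1 h2. rewrite <- h1 at 1. rewrite mC. exact h2. Qed.
Lemma le_join (A : WHBAlgebra) a b : L A a b <-> J A a b = b.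
Proof. dax A. split; intro h.
 - rewrite <- h, mC, jC. apply jabs.
 - rewrite <- h. apply mabs. Qed.
Lemma meet_lb1 (A : WHBAlgebra) a b : L A (M A a b) a.
Proof. dax A. rewrite mC, mA, m_idem. reflexivity. Qed.
Lemma meet_lb2 (A : WHBAlgebra) a b : L A (M A a b) b.
Proof. dax A. rewrite <- mA, m_idem. reflexivity. Qed.
Lemma meet_glb (A : WHBAlgebra) a b c : L A c a -> L A c b -> L A c (M A a b).
Proof. dax A. intros h1 h2. rewrite mA, h1, h2. reflexivity. Qed.
Lemma join_ub1 (A : WHBAlgebra) a b : L A a (J A a b).
Proof. dax A. apply mabs. Qed.
Lemma join_ub2 (A : WHBAlgebra) a b : L A b (J A a b).
Proof. dax A. rewrite jC. apply mabs. Qed.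
Lemma join_lub (A : WHBAlgebra) a b c : L A a c -> L A b c -> L A (J A a b) c.
Proof. intros h1 h2. apply le_join in h1. apply le_join in h2. apply le_join.
  dax A. rewrite <- jA, h2, h1. reflexivity. Qed.
Lemma le_top (A : WHBAlgebra) a : L A a (U A).
Proof. apply le_join. dax A. apply j1. Qed.
Lemma le_bot (A : WHBAlgebra) a : L A (Z A) a.
Proof. dax A. rewrite mC. apply m0. Qed.
Lemma m1 (A : WHBAlgebra) a : M A a (U A) = a.
Proof. apply le_top. Qed.
Lemma j0 (A : WHBAlgebra) a : J A a (Z A) = a.
Proof. dax A. rewrite <- (m0 a). apply jabs. Qed.
Lemma meet_mono (A : WHBAlgebra) a a' b b' : L A a a' -> L A b b' -> L A (M A a b) (M A a' b').
Proof. intros. apply meet_glb; eapply le_trans; [apply meet_lb1|auto|apply meet_lb2|auto]. Qed.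
Lemma join_mono (A : WHBAlgebra) a a' b b' : L A a a' -> L A b b' -> L A (J A a b) (J A a' b').
Proof. intros. apply join_lub; eapply le_trans; [eauto|apply join_ub1|eauto|apply join_ub2]. Qed.
Lemma distr_le (A : WHBAlgebra) x y z : L A (M A (J A x y) (J A x z)) (J A x (M A y z)).
Proof. assert (E: M A (J A x y) (J A x z) = J A x (J A (M A z x) (M A z y))).
  { dax A. rewrite dis. rewrite (mC (J A x y) x), mabs. rewrite (mC (J A x y) z), dis. reflexivity. }
  rewrite E. dax A.
  apply join_lub. apply join_ub1. apply join_lub.
  eapply le_trans. apply meet_lb2. apply join_ub1.
  eapply le_trans. 2: apply join_ub2. rewrite mC. apply le_refl. Qed.
Lemma r_mono (A : WHBAlgebra) a a' b b' : L A a' a -> L A b b' -> L A (RI A a b) (RI A a' b').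
Proof. intros h1 h2. apply le_trans with (RI A a' b).
 - assert (E : RI A a b = M A (RI A a' b) (RI A a b)).
   { apply le_join in h1. rewrite <- h1 at 1. dax A. apply rj. }
   rewrite E at 1. apply meet_lb1.
 - assert (E : RI A a' b = M A (RI A a' b) (RI A a' b')).
   { unfold le in h2. rewrite <- h2 at 1. dax A. apply rm. }
   rewrite E at 1. apply meet_lb2. Qed.
Lemma l_mono (A : WHBAlgebra) a a' b b' : L A a a' -> L A b' b -> L A (LI A a b) (LI A a' b').
Proof. intros h1 h2. apply le_trans with (LI A a' b).
 - assert (E : LI A a' b = J A (LI A a b) (LI A a' b)).
   { apply le_join in h1. rewrite <- h1 at 1. dax A. apply lj. }
   rewrite E. apply join_ub1.
 - assert (E : LI A a' b' = J A (LI A a' b) (LI A a' b')).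
   { unfold le in h2. rewrite <- h2 at 1. dax A. rewrite mC. apply lm. }
   rewrite E. apply join_ub1. Qed.

Definition pf (A : WHBAlgebra) (x : A -> Prop) :=
  (forall a b, x (M A a b) <-> x a /\ x b) /\ (forall a b, x (J A a b) <-> x a \/ x b) /\
  ~ x (Z A) /\ x (U A).

Lemma pf_up (A : WHBAlgebra) x a b : pf A x -> x a -> L A a b -> x b.
Proof. intros [hm _] xa hab. unfold le in hab. rewrite <- hab in xa. apply hm in xa. tauto. Qed.

Lemma pft (A : WHBAlgebra) (P N : A -> Prop) :
  (exists p, P p) -> (exists n, N n) ->
  (forall p p', P p -> P p' -> exists p'', P p'' /\ L A p'' p /\ L A p'' p') ->
  (forall n n', N n -> N n' -> exists n'', N n'' /\ L A n n'' /\ L A n' n'') ->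
  (forall p n, P p -> N n -> ~ L A p n) ->
  exists x, pf A x /\ (forall p, P p -> x p) /\ (forall n, N n -> ~ x n).
Proof.
  intros [p0 Pp0] [n0 Nn0] HP HN Hd.
  set (DN := fun e => exists n, N n /\ L A e n).
  set (Good := fun K : A -> Prop => (forall a b, K a -> L A b a -> K b) /\
        (forall a b, K a -> K b -> K (J A a b)) /\ (forall p, P p -> ~ K p)).
  assert (DNd : forall a b, DN a -> L A b a -> DN b).
  { intros a b [n [Nn ha]] hb. exists n. split; auto. eapply le_trans; eauto. }
  assert (DNj : forall a b, DN a -> DN b -> DN (J A a b)).
  { intros a b [n [Nn ha]] [n' [Nn' hb]]. destruct (HN n n' Nn Nn') as [n'' [N'' [h1 h2]]].
    exists n''. split; auto. apply join_lub; eapply le_trans; eauto. }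
  assert (DNP : forall p, P p -> ~ DN p).
  { intros p Pp [n [Nn h]]. exact (Hd p n Pp Nn h). }
  set (Coll := fun K : A -> Prop => Good (fun e => K e \/ DN e)).
  destruct (@classical_sets.Zorn_bigcup A Coll) as [K0 [HK Hmax]].
  { intros F HF Htot. unfold Coll, Good, classical_sets.bigcup. split; [|split].
    - intros a b [[X FX Xa]|DNa] hb.
      + destruct (HF X FX) as [hd _]. destruct (hd a b (or_introl Xa) hb) as [Xb|DNb].
        * left. exists X; auto.
        * right; auto.
      + right. eauto.
    - intros a b [[X FX Xa]|DNa] [[Y FY Yb]|DNb].
      + destruct (Htot X Y FX FY) as [hXY|hYX].
        * destruct (HF Y FY) as [_ [hj _]]. destruct (hj a b (or_introl (hXY a Xa)) (or_introl Yb)) as [h|h].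
          left. exists Y; auto. right; auto.
        * destruct (HF X FX) as [_ [hj _]]. destruct (hj a b (or_introl Xa) (or_introl (hYX b Yb))) as [h|h].
          left. exists X; auto. right; auto.
      + destruct (HF X FX) as [_ [hj _]]. destruct (hj a b (or_introl Xa) (or_intror DNb)) as [h|h].
        left. exists X; auto. right; auto.
      + destruct (HF Y FY) as [_ [hj _]]. destruct (hj a b (or_intror DNa) (or_introl Yb)) as [h|h].
        left. exists Y; auto. right; auto.
      + right; auto.
    - intros p Pp [[X FX Xp]|DNp].
      + destruct (HF X FX) as [_ [_ hp]]. exact (hp p Pp (or_introl Xp)).
      + exact (DNP p Pp DNp). }
  set (Jd := fun e => K0 e \/ DN e).
  assert (GJ : Good Jd) by exact HK.
  destruct GJ as [Jdown [Jjoin Jdisj]].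
  assert (DNJ : forall e, DN e -> Jd e) by (intros; right; auto).
  assert (Jn0 : Jd n0) by (apply DNJ; exists n0; split; auto; apply le_refl).
  assert (maxl : forall e, ~ Jd e -> exists p t, P p /\ Jd t /\ L A p (J A t e)).
  { intros e ne. apply NNPP. intro H.
    set (Je := fun x => exists t, Jd t /\ L A x (J A t e)).
    assert (JeC : Coll Je).
    { assert (DJ : forall a, Jd a -> Je a).
      { intros a Ja. exists a. split; auto. apply join_ub1. }
      assert (Jed : forall a b, Je a -> L A b a -> Je b).
      { intros a b [t [Jt ht]] hb. exists t. split; auto. eapply le_trans; eauto. }
      unfold Coll, Good. split; [|split].
      - intros a b [Ja|Da] hb. left. eauto. right. eauto.
      - intros a b Ha Hb. left.
        assert (Ja : Je a) by (destruct Ha; auto).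
        assert (Jb : Je b) by (destruct Hb; auto).
        destruct Ja as [t [Jt ht]]. destruct Jb as [t' [Jt' ht']].
        exists (J A t t'). split; auto. apply join_lub.
        + eapply le_trans; [exact ht|]. apply join_mono; [apply join_ub1|apply le_refl].
        + eapply le_trans; [exact ht'|]. apply join_mono; [apply join_ub2|apply le_refl].
      - intros p Pp [[t [Jt ht]]|Dp].
        + apply H. exists p, t. auto.
        + exact (DNP p Pp Dp). }
    apply (Hmax Je); auto. split.
    - intros a Ka. exists a. split. left; auto. apply join_ub1.
    - intro hs. apply ne. left. apply hs. exists n0. split; auto. apply join_ub2. }
  exists (fun e => ~ Jd e). split; [|split].
  - split; [|split; [|split]].
    + intros a b. split.
      * intro h. split; intro hj; apply h; eapply Jdown; eauto; [apply meet_lb1|apply meet_lb2].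
      * intros [ha hb] hab.
        destruct (maxl a ha) as [p [t [Pp [Jt hp]]]].
        destruct (maxl b hb) as [p' [t' [Pp' [Jt' hp']]]].
        destruct (HP p p' Pp Pp') as [p'' [Pp'' [h1 h2]]].
        apply (Jdisj p'' Pp''). apply Jdown with (J A (J A t t') (M A a b)).
        { apply Jjoin; auto. }
        eapply le_trans; [|apply distr_le]. apply meet_glb.
        -- eapply le_trans; [exact h1|]. eapply le_trans; [exact hp|]. apply join_mono; [apply join_ub1|apply le_refl].
        -- eapply le_trans; [exact h2|]. eapply le_trans; [exact hp'|]. apply join_mono; [apply join_ub2|apply le_refl].
    + intros a b. split.
      * intro h. destruct (classic (Jd a)) as [ja|ja]; [|left; auto].
        destruct (classic (Jd b)) as [jb|jb]; [|right; auto].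
        exfalso. apply h. apply Jjoin; auto.
      * intros [h|h] hj; apply h; eapply Jdown; eauto; [apply join_ub1|apply join_ub2].
    + intro h. apply h. eapply Jdown; eauto. apply le_bot.
    + intro h. apply (Jdisj p0 Pp0). eapply Jdown; eauto. apply le_top.
  - intros p Pp hp. exact (Jdisj p Pp hp).
  - intros n Nn h. apply h. apply DNJ. exists n. split; auto. apply le_refl.
Qed.

Definition Rel (A : WHBAlgebra) (x x' : A -> Prop) := forall a b, x (RI A a b) -> x' a -> x' b.

Lemma pf_m (A : WHBAlgebra) x a b : pf A x -> x (M A a b) <-> x a /\ x b.
Proof. intros [h _]. apply h. Qed.
Lemma pf_j (A : WHBAlgebra) x a b : pf A x -> x (J A a b) <-> x a \/ x b.
Proof. intros [_ [h _]]. apply h. Qed.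
Lemma pf_0 (A : WHBAlgebra) x : pf A x -> ~ x (Z A).
Proof. intros [_ [_ [h _]]]. apply h. Qed.
Lemma pf_1 (A : WHBAlgebra) x : pf A x -> x (U A).
Proof. intros [_ [_ [_ h]]]. apply h. Qed.

Lemma QR1 (A : WHBAlgebra) x x' a b : pf A x -> pf A x' -> Rel A x' x -> x' a -> ~ x' b -> x (LI A a b).
Proof. intros px px' hR xa nb. assert (h : x' (J A b (RI A (U A) (LI A a b)))).
  { eapply pf_up; eauto. dax A. apply ax2. }
  apply (pf_j _ _ _ _ px') in h. destruct h as [h|h]; [contradiction|].
  eapply hR; eauto. apply pf_1; auto. Qed.

Lemma QR2 (A : WHBAlgebra) x x' : pf A x -> pf A x' ->
  (forall a b, x' a -> ~ x' b -> x (LI A a b)) -> Rel A x' x.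
Proof. intros px px' H c d hcd xc.
  assert (h : x (LI A (RI A c d) (Z A))) by (apply H; auto; apply pf_0; auto).
  apply (pf_up A x (M A c (LI A (RI A c d) (Z A))) d px). apply pf_m; auto. dax A. apply ax1. Qed.

Lemma core1 (A : WHBAlgebra) x b b' c d : pf A x -> x c -> ~ x d ->
  L A (M A b (LI A c d)) b' -> x (RI A b b').
Proof. intros px xc nd h.
  assert (h1 : x (RI A (U A) (LI A c d))).
  { assert (h0 : x (J A d (RI A (U A) (LI A c d)))).
    { eapply pf_up; eauto. dax A. apply ax2. }
    apply (pf_j _ _ _ _ px) in h0. destruct h0; [contradiction|auto]. }
  eapply pf_up; eauto.
  apply le_trans with (RI A b (LI A c d)). apply r_mono; [apply le_top|apply le_refl].
  assert (E : RI A b (LI A c d) = RI A b (M A b (LI A c d))).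
  { dax A. rewrite rm, rr, mC. symmetry. apply m1. }
  rewrite E. apply r_mono; [apply le_refl|exact h]. Qed.

Lemma core2 (A : WHBAlgebra) x b b' c d : pf A x -> x c -> ~ x d ->
  L A b (J A b' (RI A c d)) -> ~ x (LI A b b').
Proof. intros px xc nd h hx. apply nd.
  assert (h1 : x (LI A (RI A c d) (Z A))).
  { eapply pf_up; eauto.
    apply le_trans with (LI A (J A b' (RI A c d)) b'). apply l_mono; [exact h|apply le_refl].
    assert (E : LI A (J A b' (RI A c d)) b' = LI A (RI A c d) b').
    { dax A. rewrite lj, ll, jC. apply j0. }
    rewrite E. apply l_mono; [apply le_refl|apply le_bot]. }
  apply (pf_up A x (M A c (LI A (RI A c d) (Z A))) d px). apply pf_m; auto. dax A. apply ax1. Qed.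

Definition pre (A B : WHBAlgebra) (f : A -> B) (x : B -> Prop) : A -> Prop := fun a => x (f a).

Lemma pf_pre (A B : WHBAlgebra) f x : is_hom A B f -> pf B x -> pf A (pre A B f x).
Proof. intros (hm & hj & hr & hl & h0 & h1) px. unfold pre. split; [|split; [|split]].
  - intros a b. rewrite hm. apply pf_m; auto.
  - intros a b. rewrite hj. apply pf_j; auto.
  - rewrite h0. apply pf_0; auto.
  - rewrite h1. apply pf_1; auto. Qed.

Lemma Rel_pre (A B : WHBAlgebra) f x x' : is_hom A B f -> Rel B x x' -> Rel A (pre A B f x) (pre A B f x').
Proof. intros (hm & hj & hr & hl & h0 & h1) h a b. unfold pre. rewrite hr. apply h. Qed.

Lemma L1 (A : WHBAlgebra) x b b' : pf A x -> ~ x (RI A b b') ->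
  exists x', pf A x' /\ Rel A x x' /\ x' b /\ ~ x' b'.
Proof. intros px nx.
  destruct (pft A (fun e => exists c d, x c /\ ~ x d /\ e = M A b (LI A c d)) (fun e => e = b'))
    as [G [pG [GP GN]]].
  - exists (M A b (LI A (U A) (Z A))), (U A), (Z A). split; [apply pf_1|split; [apply pf_0|]]; auto.
  - exists b'; auto.
  - intros p p' [c [d [xc [nd ->]]]] [c' [d' [xc' [nd' ->]]]].
    exists (M A b (LI A (M A c c') (J A d d'))). split; [|split].
    + exists (M A c c'), (J A d d'). split; [apply pf_m; auto|split; auto].
      rewrite pf_j; auto. tauto.
    + apply meet_mono; [apply le_refl|apply l_mono; [apply meet_lb1|apply join_ub1]].
    + apply meet_mono; [apply le_refl|apply l_mono; [apply meet_lb2|apply join_ub2]].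
  - intros n n' -> ->. exists b'. split; auto. split; apply le_refl.
  - intros p n [c [d [xc [nd ->]]]] -> h. apply nx. eapply core1; eauto.
  - exists G. split; auto. split; [|split].
    + apply QR2; auto. intros a a' xa na.
      assert (h : G (M A b (LI A a a'))) by (apply GP; exists a, a'; auto).
      apply pf_m in h; tauto.
    + assert (h : G (M A b (LI A (U A) (Z A)))).
      { apply GP. exists (U A), (Z A). split; [apply pf_1|split; [apply pf_0|]]; auto. }
      apply pf_m in h; tauto.
    + apply GN; auto. Qed.

Lemma L2 (A : WHBAlgebra) x b b' : pf A x -> x (LI A b b') ->
  exists x', pf A x' /\ Rel A x' x /\ x' b /\ ~ x' b'.
Proof. intros px hx.
  destruct (pft A (fun e => e = b) (fun e => exists c d, x c /\ ~ x d /\ e = J A b' (RI A c d)))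
    as [G [pG [GP GN]]].
  - exists b; auto.
  - exists (J A b' (RI A (U A) (Z A))), (U A), (Z A). split; [apply pf_1|split; [apply pf_0|]]; auto.
  - intros p p' -> ->. exists b. split; auto. split; apply le_refl.
  - intros p p' [c [d [xc [nd ->]]]] [c' [d' [xc' [nd' ->]]]].
    exists (J A b' (RI A (M A c c') (J A d d'))). split; [|split].
    + exists (M A c c'), (J A d d'). split; [apply pf_m; auto|split; auto].
      rewrite pf_j; auto. tauto.
    + apply join_mono; [apply le_refl|apply r_mono; [apply meet_lb1|apply join_ub1]].
    + apply join_mono; [apply le_refl|apply r_mono; [apply meet_lb2|apply join_ub2]].
  - intros p n -> [c [d [xc [nd ->]]]] h. eapply core2; eauto.
  - exists G. split; auto. split; [|split].
    + intros c d hG xc. apply NNPP. intro nd.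
      apply (GN (J A b' (RI A c d))). exists c, d. auto.
      apply pf_j; auto.
    + apply GP; auto.
    + intro hb. apply (GN (J A b' (RI A (U A) (Z A)))).
      exists (U A), (Z A). split; [apply pf_1|split; [apply pf_0|]]; auto.
      apply pf_j; auto. Qed.

Lemma B1 (A C : WHBAlgebra) f y z : is_hom A C f -> pf C y -> pf A z -> Rel A (pre A C f y) z ->
  exists y', pf C y' /\ Rel C y y' /\ forall a, y' (f a) <-> z a.
Proof. intros hf py pz hR. pose proof hf as (hm & hj & hr & hl & h0 & h1).
  destruct (pft C (fun e => exists a c d, z a /\ y c /\ ~ y d /\ e = M C (f a) (LI C c d))
                  (fun e => exists a, ~ z a /\ e = f a))
    as [G [pG [GP GN]]].
  - exists (M C (f (U A)) (LI C (U C) (Z C))), (U A), (U C), (Z C).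
    split; [apply pf_1|split; [apply pf_1|split; [apply pf_0|]]]; auto.
  - exists (f (Z A)), (Z A). split; auto. apply pf_0; auto.
  - intros p p' [a [c [d [za [xc [nd ->]]]]]] [a' [c' [d' [za' [xc' [nd' ->]]]]]].
    exists (M C (f (M A a a')) (LI C (M C c c') (J C d d'))). split; [|split].
    + exists (M A a a'), (M C c c'), (J C d d'). split; [apply pf_m; auto|].
      split; [apply pf_m; auto|split; auto]. rewrite pf_j; auto. tauto.
    + rewrite hm. apply meet_mono; [apply meet_lb1|apply l_mono; [apply meet_lb1|apply join_ub1]].
    + rewrite hm. apply meet_mono; [apply meet_lb2|apply l_mono; [apply meet_lb2|apply join_ub2]].
  - intros n n' [a [na ->]] [a' [na' ->]]. exists (f (J A a a')). split; [|split].
    + exists (J A a a'). split; auto. rewrite pf_j; auto. tauto.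
    + rewrite hj. apply join_ub1.
    + rewrite hj. apply join_ub2.
  - intros p n [a [c [d [za [xc [nd ->]]]]]] [a' [na' ->]] h.
    apply na'. apply (hR a a'); auto. unfold pre. rewrite hr. eapply core1; eauto.
  - exists G. split; auto. split.
    + apply QR2; auto. intros a a' xa na.
      assert (h : G (M C (f (U A)) (LI C a a'))).
      { apply GP; exists (U A), a, a'. split; auto. apply pf_1; auto. }
      apply pf_m in h; tauto.
    + intro a. split.
      * intro h. apply NNPP. intro na. apply (GN (f a)); auto. exists a; auto.
      * intro za. assert (h : G (M C (f a) (LI C (U C) (Z C)))).
        { apply GP. exists a, (U C), (Z C). split; auto.
          split; [apply pf_1|split; [apply pf_0|]]; auto. }
        apply pf_m in h; tauto. Qed.

Lemma B2 (A C : WHBAlgebra) f y z : is_hom A C f -> pf C y -> pf A z -> Rel A z (pre A C f y) ->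
  exists y', pf C y' /\ Rel C y' y /\ forall a, y' (f a) <-> z a.
Proof. intros hf py pz hR. pose proof hf as (hm & hj & hr & hl & h0 & h1).
  destruct (pft C (fun e => exists a, z a /\ e = f a)
                  (fun e => exists a c d, ~ z a /\ y c /\ ~ y d /\ e = J C (f a) (RI C c d)))
    as [G [pG [GP GN]]].
  - exists (f (U A)), (U A). split; auto. apply pf_1; auto.
  - exists (J C (f (Z A)) (RI C (U C) (Z C))), (Z A), (U C), (Z C).
    split; [apply pf_0|split; [apply pf_1|split; [apply pf_0|]]]; auto.
  - intros p p' [a [za ->]] [a' [za' ->]]. exists (f (M A a a')). split; [|split].
    + exists (M A a a'). split; auto. apply pf_m; auto.
    + rewrite hm. apply meet_lb1.
    + rewrite hm. apply meet_lb2.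
  - intros p p' [a [c [d [za [xc [nd ->]]]]]] [a' [c' [d' [za' [xc' [nd' ->]]]]]].
    exists (J C (f (J A a a')) (RI C (M C c c') (J C d d'))). split; [|split].
    + exists (J A a a'), (M C c c'), (J C d d'). split; [rewrite pf_j; auto; tauto|].
      split; [apply pf_m; auto|split; auto]. rewrite pf_j; auto. tauto.
    + rewrite hj. apply join_mono; [apply join_ub1|apply r_mono; [apply meet_lb1|apply join_ub1]].
    + rewrite hj. apply join_mono; [apply join_ub2|apply r_mono; [apply meet_lb2|apply join_ub2]].
  - intros p n [a [za ->]] [a' [c [d [na' [xc [nd ->]]]]]] h.
    apply (core2 C y (f a) (f a') c d py xc nd h). rewrite <- hl.
    apply (QR1 A (pre A C f y) z a a'); auto. apply pf_pre; auto.
  - exists G. split; auto. split.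
    + intros c d hG xc. apply NNPP. intro nd.
      apply (GN (J C (f (Z A)) (RI C c d))). exists (Z A), c, d. split; [apply pf_0|]; auto.
      apply pf_j; auto.
    + intro a. split.
      * intro h. apply NNPP. intro na. apply (GN (J C (f a) (RI C (U C) (Z C)))).
        exists a, (U C), (Z C). split; auto. split; [apply pf_1|split; [apply pf_0|]]; auto.
        apply pf_j; auto.
      * intro za. apply GP. exists a; auto. Qed.

Lemma lift (A C : WHBAlgebra) f z : is_hom A C f -> injective f -> pf A z ->
  exists y, pf C y /\ forall a, y (f a) <-> z a.
Proof. intros hf finj pz. pose proof hf as (hm & hj & hr & hl & h0 & h1).
  destruct (pft C (fun e => exists a, z a /\ e = f a) (fun e => exists a, ~ z a /\ e = f a))
    as [G [pG [GP GN]]].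
  - exists (f (U A)), (U A). split; auto. apply pf_1; auto.
  - exists (f (Z A)), (Z A). split; auto. apply pf_0; auto.
  - intros p p' [a [za ->]] [a' [za' ->]]. exists (f (M A a a')). split; [|split].
    + exists (M A a a'). split; auto. apply pf_m; auto.
    + rewrite hm. apply meet_lb1.
    + rewrite hm. apply meet_lb2.
  - intros n n' [a [na ->]] [a' [na' ->]]. exists (f (J A a a')). split; [|split].
    + exists (J A a a'). split; auto. rewrite pf_j; auto. tauto.
    + rewrite hj. apply join_ub1.
    + rewrite hj. apply join_ub2.
  - intros p n [a [za ->]] [a' [na' ->]] h. apply na'.
    unfold le in h. rewrite <- hm in h. apply finj in h.
    exact (pf_up A z a a' pz za h).
  - exists G. split; auto. intro a. split.
    + intro h. apply NNPP. intro na. apply (GN (f a)); auto. exists a; auto.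
    + intro za. apply GP. exists a; auto. Qed.

Lemma sep (A : WHBAlgebra) b b' : ~ L A b b' -> exists x, pf A x /\ x b /\ ~ x b'.
Proof. intro h. destruct (pft A (fun e => e = b) (fun e => e = b')) as [G [pG [GP GN]]].
  - exists b; auto.
  - exists b'; auto.
  - intros p p' -> ->. exists b. split; auto. split; apply le_refl.
  - intros n n' -> ->. exists b'. split; auto. split; apply le_refl.
  - intros p n -> -> h'. auto.
  - exists G. auto. Qed.

Definition Pops (T : Type) (RR : T -> T -> Prop) : WHBOps (T -> Prop) :=
  {| meet := fun U V z => U z /\ V z;
     join := fun U V z => U z \/ V z;
     rimp := fun U V z => forall z', RR z z' -> U z' -> V z';
     limp := fun U V z => exists z', RR z' z /\ U z' /\ ~ V z';
     bot := fun _ => False;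
     top := fun _ => True |}.

Ltac ext := let z := fresh "z" in apply functional_extensionality; intro z; apply propositional_extensionality; simpl.

Lemma Pops_WHB T RR : is_WHB (Pops T RR).
Proof. unfold is_WHB, le; cbv zeta. repeat split; intros; ext; try (simpl; firstorder; fail).
  - split.
    + intros [z' [h1 [h2 h3]]]. destruct (classic (b z')) as [hb|hb].
      * right. exists z'. tauto.
      * left. exists z'. auto.
    + intros [[z' [h1 [h2 h3]]]|[z' [h1 [h2 h3]]]]; exists z'; tauto.
  - split; [intros [h _]; exact h|]. intros [z' [h1 [h2 h3]]]. split.
    + exists z'. auto.
    + destruct (classic (b z')) as [hb|hb].
      * right. exists z'. auto.
      * left. exists z'. auto.
  - split; [intros [h _]; exact h|]. intro ha. split; auto.
    destruct (classic (b z)) as [hb|hb]; [left; auto|right].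
    intros z' hr _. exists z. auto.
Qed.

Definition Palg (T : Type) (RR : T -> T -> Prop) : WHBAlgebra :=
  {| carrier := T -> Prop; ops := Pops T RR; whb_ax := Pops_WHB T RR |}.

Definition Zt (A B C : WHBAlgebra) (i : A -> B) (j : A -> C) :=
  {p : (B -> Prop) * (C -> Prop) | pf B (fst p) /\ pf C (snd p) /\ forall a, fst p (i a) <-> snd p (j a)}.

Definition RZ (A B C : WHBAlgebra) (i : A -> B) (j : A -> C) (z z' : Zt A B C i j) : Prop :=
  Rel B (fst (proj1_sig z)) (fst (proj1_sig z')) /\ Rel C (snd (proj1_sig z)) (snd (proj1_sig z')).

Theorem corollary6p26 :
  forall (A B C : WHBAlgebra) (i : A -> B) (j : A -> C),
    is_hom A B i -> injective i ->
    is_hom A C j -> injective j ->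
    exists (D : WHBAlgebra) (h : B -> D) (k : C -> D),
      is_hom B D h /\ injective h /\
      is_hom C D k /\ injective k /\
      (forall a : A, h (i a) = k (j a)).
Proof.
  intros A B C i j hi ii hj ij.
  pose proof hi as (im & ijn & ir & il & i0 & i1).
  pose proof hj as (jm & jjn & jr & jl & j0' & j1').
  exists (Palg (Zt A B C i j) (RZ A B C i j)).
  exists (fun b z => fst (proj1_sig z) b), (fun c z => snd (proj1_sig z) c).
  split; [|split; [|split; [|split]]].
  - split; [|split; [|split; [|split; [|split]]]]; intros; ext;
      destruct z as [[x y] [px [py e]]]; simpl in *.
    + apply pf_m; auto.
    + apply pf_j; auto.
    + split.
      * intros hx [[x' y'] [px' [py' e']]] [R1 R2] hb. simpl in *. exact (R1 _ _ hx hb).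
      * intro H. apply NNPP; intro nx.
        destruct (L1 B x a b px nx) as [x' [px' [Rx [xb nb]]]].
        assert (hR : Rel A (pre A C j y) (pre A B i x')).
        { intros u v h1 h2. unfold pre in *.
          apply (Rx (i u) (i v)); auto. rewrite <- ir. apply e. exact h1. }
        destruct (B1 A C j y (pre A B i x') hj py (pf_pre A B i x' hi px') hR) as [y' [py' [Ry ey]]].
        apply nb. refine (H (exist _ (x', y') (conj px' (conj py' (fun u => iff_sym (ey u))))) _ xb).
        split; simpl; auto.
    + split.
      * intro hx. destruct (L2 B x a b px hx) as [x' [px' [Rx [xa nb]]]].
        assert (hR : Rel A (pre A B i x') (pre A C j y)).
        { intros u v h1 h2. unfold pre in *. apply e. apply (Rx (i u)); [rewrite <- ir; exact h1|].
          apply e. exact h2. }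
        destruct (B2 A C j y (pre A B i x') hj py (pf_pre A B i x' hi px') hR) as [y' [py' [Ry ey]]].
        exists (exist _ (x', y') (conj px' (conj py' (fun u => iff_sym (ey u))))).
        simpl. split; [split; simpl; auto|auto].
      * intros [[[x' y'] [px' [py' e']]] [[R1 R2] [hb hnb]]]. simpl in *.
        exact (QR1 B x x' a b px px' R1 hb hnb).
    + split; [apply pf_0; auto|contradiction].
    + split; [intros; exact I|intros; apply pf_1; auto].
  - intros b b' E. apply le_antisym; apply NNPP; intro nle; destruct (sep B _ _ nle) as [x [px [xb nb]]];
      destruct (lift A C j (pre A B i x) hj ij (pf_pre A B i x hi px)) as [y [py ey]];
      pose proof (f_equal (fun F => F (exist _ (x, y) (conj px (conj py (fun u => iff_sym (ey u))))
                                        : Zt A B C i j)) E) as E'; simpl in E'.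
    + apply nb. rewrite <- E'. exact xb.
    + apply nb. rewrite E'. exact xb.
  - split; [|split; [|split; [|split; [|split]]]]; intros; ext;
      destruct z as [[x y] [px [py e]]]; simpl in *.
    + apply pf_m; auto.
    + apply pf_j; auto.
    + split.
      * intros hx [[x' y'] [px' [py' e']]] [R1 R2] hb. simpl in *. exact (R2 _ _ hx hb).
      * intro H. apply NNPP; intro nx.
        destruct (L1 C y a b py nx) as [y' [py' [Ry [yb nb]]]].
        assert (hR : Rel A (pre A B i x) (pre A C j y')).
        { intros u v h1 h2. unfold pre in *.
          apply (Ry (j u) (j v)); auto. rewrite <- jr. apply e. exact h1. }
        destruct (B1 A B i x (pre A C j y') hi px (pf_pre A C j y' hj py') hR) as [x' [px' [Rx ex]]].
        apply nb. refine (H (exist _ (x', y') (conj px' (conj py' ex))) _ yb).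
        split; simpl; auto.
    + split.
      * intro hx. destruct (L2 C y a b py hx) as [y' [py' [Ry [ya nb]]]].
        assert (hR : Rel A (pre A C j y') (pre A B i x)).
        { intros u v h1 h2. unfold pre in *. apply e. apply (Ry (j u)); [rewrite <- jr; exact h1|].
          apply e. exact h2. }
        destruct (B2 A B i x (pre A C j y') hi px (pf_pre A C j y' hj py') hR) as [x' [px' [Rx ex]]].
        exists (exist _ (x', y') (conj px' (conj py' ex))).
        simpl. split; [split; simpl; auto|auto].
      * intros [[[x' y'] [px' [py' e']]] [[R1 R2] [hb hnb]]]. simpl in *.
        exact (QR1 C y y' a b py py' R2 hb hnb).
    + split; [apply pf_0; auto|contradiction].
    + split; [intros; exact I|intros; apply pf_1; auto].
  - intros c c' E. apply le_antisym; apply NNPP; intro nle; destruct (sep C _ _ nle) as [y [py [yc nc]]];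
      destruct (lift A B i (pre A C j y) hi ii (pf_pre A C j y hj py)) as [x [px ex]];
      pose proof (f_equal (fun F => F (exist _ (x, y) (conj px (conj py ex))
                                        : Zt A B C i j)) E) as E'; simpl in E'.
    + apply nc. rewrite <- E'. exact yc.
    + apply nc. rewrite E'. exact yc.
  - intro a. ext. destruct z as [[x y] [px [py e]]]. simpl. apply e.
Qed.
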